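(* Let $\lambda$ and $\chi$ be infinite cardinals. Then there are functions $f_\eta$, for $\eta\in {}^\chi\lambda$, such that: (i) $\mathrm{Dom}(f_\eta)=\{\eta\restriction\alpha:\alpha<\chi\}$; (ii) $\mathrm{Rang}(f_\eta)\subseteq\lambda$; (iii) for every function $f:{}^{\chi>}\lambda\to\lambda$ there is $\eta\in{}^\chi\lambda$ with $f_\eta\subseteq f$.
   Context: ${}^\chi\lambda$ is the set of functions from $\chi$ to $\lambda$, and ${}^{\chi>}\lambda=\bigcup_{\alpha<\chi}{}^\alpha\lambda$ is the set of sequences of ordinals $<\lambda$ of length $<\chi$. For $\eta\in{}^\chi\lambda$ and $\alpha<\chi$, $\eta\restriction\alpha$ is the restriction of $\eta$ to $\alpha$. *)

(* Defs.v *)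
(* Cardinals are represented as well-ordered types that are
   initial ordinals: a type [T] with a strict well-order [lt] such that no
   proper initial segment [{b | lt b a}] admits an injection of [T]. *)

Definition is_cardinal (T : Type) (lt : T -> T -> Prop) : Prop :=
  well_founded lt /\
  (forall x, ~ lt x x) /\
  (forall x y z, lt x y -> lt y z -> lt x z) /\
  (forall x y, lt x y \/ x = y \/ lt y x) /\
  (forall a : T, ~ exists g : T -> {b : T | lt b a},
                     forall x y, g x = g y -> x = y).

Definition infinite (T : Type) : Prop :=
  exists g : nat -> T, forall m n, g m = g n -> m = n.

(* ^{chi>} lambda : sequences of elements of lam of length alpha < chi,
   a sequence of length alpha being a function on {beta | beta < alpha}. *)
Definition seqs (chi : Type) (ltc : chi -> chi -> Prop) (lam : Type) : Type :=
  {a : chi & {b : chi | ltc b a} -> lam}.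

Definition restr {chi : Type} {ltc : chi -> chi -> Prop} {lam : Type}
  (eta : chi -> lam) (a : chi) : seqs chi ltc lam :=
  existT _ a (fun b => eta (proj1_sig b)).

(* Main.v *)
Require Import Defs.
From Stdlib Require Import Classical ClassicalEpsilon FunctionalExtensionality.

Theorem fact1p5 (chi : Type) (ltc : chi -> chi -> Prop)
  (lam : Type) (ltl : lam -> lam -> Prop) :
  is_cardinal chi ltc -> infinite chi ->
  is_cardinal lam ltl -> infinite lam ->
  exists F : (chi -> lam) -> seqs chi ltc lam -> option lam,
    (* (i) Dom(f_eta) = { eta |` alpha : alpha < chi };
       (ii) Rang(f_eta) ⊆ lam holds by typing *)
    (forall (eta : chi -> lam) (s : seqs chi ltc lam),
        F eta s <> None <-> exists a : chi, s = restr eta a) /\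
    (* (iii) every f : ^{chi>}lam -> lam extends some f_eta *)
    (forall f : seqs chi ltc lam -> lam,
        exists eta : chi -> lam,
          forall (s : seqs chi ltc lam) (v : lam), F eta s = Some v -> f s = v).
Proof.
  intros [wf _] _ _ _.
  exists (fun eta s => if excluded_middle_informative (restr (ltc:=ltc) eta (projT1 s) = s)
                then Some (eta (projT1 s)) else None).
  split.
  - intros eta s; destruct excluded_middle_informative as [e|n]; split.
    + intros _; exists (projT1 s); auto.
    + discriminate.
    + tauto.
    + intros [a ->]; exfalso; apply n; reflexivity.
  - intros f.
    set (G := fun a (rec : forall y, ltc y a -> lam) =>
                f (existT _ a (fun b : {b | ltc b a} => rec (proj1_sig b) (proj2_sig b)))
                  : lam).
    set (eta := Fix wf (fun _ => lam) G).
    assert (Heta : forall a, eta a = f (restr (ltc:=ltc) eta a)).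
    { intro a. unfold eta at 1. rewrite Fix_eq.
      - reflexivity.
      - intros x r1 r2 H. unfold G. f_equal. f_equal.
        apply functional_extensionality. intros [b hb]. simpl. apply H. }
    exists eta. intros s v.
    destruct excluded_middle_informative as [e|n]; [|discriminate].
    intro H; injection H as <-. rewrite Heta, e. reflexivity.
Qed.
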